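(* Let $\mathbf{A}=\langle A;P\rangle$ be a partial algebra with more than one element, and let $\mathbf{A}_0$ be its one-point completion. Then for every $n$: (1) any generating set for $\mathbf{A}^n$ is a generating set for $\mathbf{A}_0^n$, and (2) any generating set for $\mathbf{A}_0^n$ contains a generating set for $\mathbf{A}^n$. In particular, least size generating sets for $\mathbf{A}^n$ and $\mathbf{A}_0^n$ have the same size, and if $\mathbf{A}^n$ or $\mathbf{A}_0^n$ have any minimal generating sets, then they are the same.
   Context: A partial algebra is a set equipped with a set of partial operations. Powers of partial algebras are formed coordinatewise: a partial operation is defined on a tuple of elements of $A^n$ exactly when it is defined in each coordinate. A subset $G$ generates a partial algebra if the smallest subset containing $G$ and closed under all partial operations (whenever defined) is the whole universe. The one-point completion of $\mathbf{A}=\langle A;P\rangle$ is the total algebra $\mathbf{A}_0$ with universe $A_0=A\cup\{0\}$, where $0\notin A$, and operations $\{p_0: p\in P\}\cup\{\wedge\}$: if $p\in P$ is an $m$-ary partial operation with domain $D\subseteq A^m$, then $p_0(\vec a)=p(\vec a)$ for $\vec a\in D$ and $p_0(\vec a)=0$ for $\vec a\in A_0^m\setminus D$; and $a\wedge b=a$ if $a=b$, $a\wedge b=0$ otherwise. *)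

(* Defs.v *)
From mathcomp Require Import all_boot.
From Stdlib Require Import ClassicalEpsilon.

Set Implicit Arguments.
Unset Strict Implicit.
Unset Printing Implicit Defensive.

(* A partial algebra <A; P>: carrier [carrier], the operation symbols are
   indexed by [opI]; symbol [i] has arity [arity i], domain
   [pdom i] (a psubset of A^(arity i)), and value [pop i] (only relevant
   on the domain). *)
Record palg := PAlg {
  carrier : Type;
  opI : Type;
  arity : opI -> nat;
  pdom : forall i, ('I_(arity i) -> carrier) -> Prop;
  pop : forall i, ('I_(arity i) -> carrier) -> carrier
}.

Definition psubset (X : Type) (S T : X -> Prop) := forall x, S x -> T x.

Definition closed (B : palg) (S : carrier B -> Prop) :=
  forall i (a : 'I_(arity i) -> carrier B),
    (forall j, S (a j)) -> pdom a -> S (pop a).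

Definition gen_by (B : palg) (G : carrier B -> Prop) (x : carrier B) :=
  forall S, psubset G S -> closed S -> S x.

Definition generates (B : palg) (G : carrier B -> Prop) :=
  forall x, gen_by G x.

Definition minimal_gen (B : palg) (G : carrier B -> Prop) :=
  generates G /\ forall H, psubset H G -> generates H -> psubset G H.

Definition ppow (B : palg) (n : nat) : palg :=
  @PAlg ('I_n -> carrier B) (opI B) (@arity B)
    (fun i a => forall k : 'I_n, pdom (fun j => a j k))
    (fun i a => fun k : 'I_n => pop (fun j => a j k)).

(* One-point completion. The universe is [option A], with [None] playing
   the role of the new element 0. *)
Definition p0 (B : palg) (i : opI B) (a : 'I_(arity i) -> option (carrier B))
  : option (carrier B) :=
  match excluded_middle_informative
          (exists b : 'I_(arity i) -> carrier B,
              (forall j, a j = Some (b j)) /\ pdom b) with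
  | left H => Some (pop (proj1_sig (constructive_indefinite_description _ H)))
  | right _ => None
  end.

Definition meet0 (X : Type) (a : 'I_2 -> option X) : option X :=
  match excluded_middle_informative (a ord0 = a (@Ordinal 2 1 isT)) with
  | left _ => a ord0
  | right _ => None
  end.

Definition arity0 (B : palg) (i : option (opI B)) : nat :=
  match i with Some i' => arity i' | None => 2 end.

Definition pop0 (B : palg) (i : option (opI B)) :
  ('I_(arity0 i) -> option (carrier B)) -> option (carrier B) :=
  match i as i0 return ('I_(arity0 i0) -> option (carrier B)) -> option (carrier B) with
  | Some i' => fun a => p0 a
  | None => fun a => @meet0 (carrier B) a
  end.

Definition completion (B : palg) : palg :=
  @PAlg (option (carrier B)) (option (opI B)) (@arity0 B)
    (fun _ _ => True) (@pop0 B).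

Definition embed (X : Type) (n : nat) (g : 'I_n -> X) : 'I_n -> option X :=
  fun k => Some (g k).

Definition embed_set (X : Type) (n : nat) (G : ('I_n -> X) -> Prop)
  : ('I_n -> option X) -> Prop :=
  fun y => exists g, G g /\ y = embed g.

Definition card_le (X : Type) (G : X -> Prop) (K : Type) :=
  exists f : {x | G x} -> K, forall u v, f u = f v -> u = v.

(* Main.v *)
Require Import Defs.
From mathcomp Require Import all_boot.
From Stdlib Require Import ClassicalEpsilon FunctionalExtensionality ProofIrrelevance.

Set Implicit Arguments.
Unset Strict Implicit.

Lemma embed_inj (X : Type) n (g1 g2 : 'I_n -> X) : embed g1 = embed g2 -> g1 = g2.
Proof.
move=> H; apply: functional_extensionality => k.
have := f_equal (fun f => f k) H; rewrite /embed; by case.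
Qed.

Lemma p0_some (B : palg) (i : opI B) (b : 'I_(arity i) -> carrier B) :
  pdom b -> p0 (fun j => Some (b j)) = Some (pop b).
Proof.
move=> Hd; rewrite /p0.
case: excluded_middle_informative => [e|ne]; last first.
  by exfalso; apply: ne; exists b.
case: (constructive_indefinite_description _ e) => bb [H1 H2] /=.
have -> : bb = b; last by [].
apply: functional_extensionality => j; by case: (H1 j).
Qed.

Lemma p0_inv (B : palg) (i : opI B) (c : 'I_(arity i) -> option (carrier B)) v :
  p0 c = Some v -> exists b, (forall j, c j = Some (b j)) /\ pdom b /\ v = pop b.
Proof.
rewrite /p0; case: excluded_middle_informative => [e|ne]; last by [].
case: (constructive_indefinite_description _ e) => bb [H1 H2] /= [<-].
by exists bb.
Qed.

Lemma part1 (B : palg) (a b : carrier B) (hab : a <> b) n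
  (G : ('I_n -> carrier B) -> Prop) :
  @generates (ppow B n) G -> @generates (ppow (completion B) n) (embed_set G).
Proof.
move=> HG y S HS Hcl.
have Emb : forall g, S (embed g).
  move=> g; apply: (HG g (fun x => S (embed x))).
    by move=> x Gx; apply: HS; exists x.
  move=> i c Hc Hd.
  have := Hcl (Some i) (fun j => embed (c j)) Hc (fun _ => I).
  have -> : (@pop (ppow (completion B) n) (Some i) (fun j => embed (c j)))
     = embed (@pop (ppow B n) i c); last by [].
  apply: functional_extensionality => k /=.
  rewrite /embed; exact: (p0_some (Hd k)).
pose u := embed (fun k => odflt a (y k)).
pose v := embed (fun k => odflt b (y k)).
have := Hcl None (fun j : 'I_2 => if val j == 0 then u else v).
have -> : (@pop (ppow (completion B) n) None (fun j : 'I_2 => if val j == 0 then u else v)) = y.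
  apply: functional_extensionality => k /=.
  rewrite /meet0 /=; case: excluded_middle_informative; rewrite /u /v /embed /=;
    case: (y k) => [x|] //=.
  by case.
by apply => [[[|[|j]] Hj]|] //=; apply: Emb.
Qed.

Lemma part2 (B : palg) (a0 : carrier B) n
  (G0 : ('I_n -> option (carrier B)) -> Prop) :
  @generates (ppow (completion B) n) G0 ->
  @generates (ppow B n) (fun g => G0 (embed g)).
Proof.
move=> HG0 x S HS Hcl.
pose S0 := fun y : 'I_n -> option (carrier B) => forall g, y = embed g -> S g.
suff : S0 (embed x) by apply.
apply: (HG0 (embed x) S0).
  by move=> y Gy g E; apply: HS; rewrite /= -E.
move=> [i|] c Hc _ g Heq.
  have Hk : forall k, exists bk : 'I_(arity i) -> carrier B,
      (forall j, c j k = Some (bk j)) /\ pdom bk /\ g k = pop bk.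
    move=> k; apply: p0_inv.
    by have := f_equal (fun f => f k) Heq.
  pose d := fun j k => odflt a0 (c j k).
  have Ed : forall (k : 'I_n) (bk : 'I_(arity i) -> carrier B),
      (forall j, c j k = Some (bk j)) -> (fun j => d j k) = bk.
    move=> k bk H; apply: functional_extensionality => j'; by rewrite /d H.
  have Sd : forall j, S (d j).
    move=> j; apply: (Hc j (d j)); apply: functional_extensionality => k.
    case: (Hk k) => bk [H1 _]; by rewrite /embed /d H1.
  have := Hcl i d Sd.
  have Pd : @pdom (ppow B n) i d.
    move=> k /=; case: (Hk k) => bk [H1 [H2 _]]; by rewrite (Ed k bk H1).
  move=> /(_ Pd).
  have -> : g = @pop (ppow B n) i d; last by [].
  apply: functional_extensionality => k /=.
  case: (Hk k) => bk [H1 [_ H3]]; by rewrite (Ed k bk H1).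
apply: (Hc ord0); apply: functional_extensionality => k.
have := f_equal (fun f => f k) Heq; rewrite /= /meet0 /embed.
by case: excluded_middle_informative.
Qed.
Lemma gen_ext (B : palg) (G H : carrier B -> Prop) :
  (forall y, G y <-> H y) -> generates G -> generates H.
Proof.
move=> E HG x S HS Hc; apply: (HG x S) => // y /E; exact: HS.
Qed.

Theorem theorem3p2 (B : palg) :
  (exists a b : carrier B, a <> b) ->
  forall n : nat,
    (* (1) *)
    (forall G : carrier (ppow B n) -> Prop,
        generates G ->
        @generates (ppow (completion B) n) (embed_set G)) /\
    (* (2) *)
    (forall G0 : carrier (ppow (completion B) n) -> Prop,
        generates G0 ->
        exists G : carrier (ppow B n) -> Prop,
          generates G /\ psubset (embed_set G) G0) /\
    (* least size generating sets have the same size *)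
    (forall K : Type,
        (exists G : carrier (ppow B n) -> Prop, generates G /\ card_le G K) <->
        (exists G0 : carrier (ppow (completion B) n) -> Prop,
            generates G0 /\ card_le G0 K)) /\
    (* the minimal generating sets are the same *)
    (forall G0 : carrier (ppow (completion B) n) -> Prop,
        minimal_gen G0 <->
        exists G : carrier (ppow B n) -> Prop,
          minimal_gen G /\ forall y, G0 y <-> embed_set G y).
Proof.
move=> [a [b hab]] n.
have P1 := @part1 B a b hab n.
have P2 : forall G0 : carrier (ppow (completion B) n) -> Prop,
    generates G0 ->
    exists G : carrier (ppow B n) -> Prop,
      generates G /\ psubset (embed_set G) G0.
  move=> G0 HG0; exists (fun g => G0 (embed g)); split.
    exact: (part2 a HG0).
  by move=> y [g [Gg ->]].
split; first exact: P1.
split; first exact: P2.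
split.
  move=> K; split.
    move=> [G [HG [f Hf]]]; exists (embed_set G); split; first exact: P1.
    pose h := fun y : {y | embed_set G y} =>
      f (exist _ (proj1_sig (constructive_indefinite_description _ (proj2_sig y)))
           (proj1 (proj2_sig (constructive_indefinite_description _ (proj2_sig y))))).
    exists h => [[y1 p1] [y2 p2]]; rewrite /h /=.
    case: (constructive_indefinite_description _ p1) => g1 [G1 E1].
    case: (constructive_indefinite_description _ p2) => g2 [G2 E2] /= /Hf.
    move=> Heq; have : g1 = g2 by have := f_equal (@proj1_sig _ _) Heq.
    move=> Eg; subst; rewrite (proof_irrelevance _ p1 p2) //.
  move=> [G0 [HG0 [f Hf]]]; case: (P2 G0 HG0) => G [HG Hs].
  exists G; split => //.
  exists (fun x : {x | G x} => f (exist _ (embed (proj1_sig x))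
            (Hs _ (ex_intro _ (proj1_sig x) (conj (proj2_sig x) erefl))))).
  move=> [x1 p1] [x2 p2] /Hf /= Heq.
  have := f_equal (@proj1_sig _ _) Heq => /= /embed_inj E; subst.
  by rewrite (proof_irrelevance _ p1 p2).
move=> G0; split.
  move=> [HG0 Hmin]; case: (P2 G0 HG0) => G [HG Hs].
  have Hs' := Hmin _ Hs (P1 G HG).
  exists G; split; last by move=> y; split; [apply: Hs' | apply: Hs].
  split => // H HH HgH g Gg.
  have Hsub : psubset (embed_set H) G0.
    move=> y [h [Hh ->]]; apply: Hs; exists h; split => //; exact: HH.
  have := Hmin _ Hsub (P1 H HgH) (embed g) (Hs _ (ex_intro _ g (conj Gg erefl))).
  by move=> [h [Hh /embed_inj ->]].
move=> [G [[HG Hmin] E]]; split.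
  apply: (@gen_ext (ppow (completion B) n) (embed_set G)) => [y|]; [by split => /E | exact: P1].
move=> H HH HgH.
case: (P2 H HgH) => G' [HG' Hs].
have sub : psubset G' G.
  move=> g Gg.
  have : embed_set G (embed g) by apply/E/HH/Hs; exists g.
  by move=> [h [Hh /embed_inj ->]].
have := Hmin _ sub HG' => sGG'.
move=> y /E [g [Gg ->]]; apply: Hs; exists g; split => //; exact: sGG'.
Qed.
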